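(* Let $\Gamma=\langle V,(w_u)_{u\in V},\alpha,\beta\rangle$ be a celebrity game with $\beta>1$ and $n=|V|$. Every Nash equilibrium graph of $\Gamma$ is either connected or equal to the edgeless graph $I_n$ on $V$.
   Context: A celebrity game $\Gamma=\langle V,(w_u)_{u\in V},\alpha,\beta\rangle$ consists of a set of players $V=\{1,\dots,n\}$, celebrity weights $w_u>0$, a link cost $\alpha>0$ and a critical distance $\beta$ with $1\le\beta\le n-1$. A strategy of player $u$ is a set $S_u\subseteq V\setminus\{u\}$; a strategy profile is $S=(S_1,\dots,S_n)$; its outcome graph $G[S]$ is the undirected graph on $V$ with edge set $\{\{u,v\}: u\in S_v\text{ or }v\in S_u\}$. With $d_G$ the graph distance (infinite between different connected components), the cost of player $u$ is $c_u(S)=\alpha|S_u|+\sum_{v:\,d_{G[S]}(u,v)>\beta}w_v$. $S$ is a Nash equilibrium if no player can strictly decrease its cost by changing only its own strategy; a graph $G$ is a Nash equilibrium graph of $\Gamma$ if $G=G[S]$ for some Nash equilibrium $S$. *)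

(* Defs.v *)
From mathcomp Require Import all_boot all_order all_algebra.
Set Implicit Arguments. Unset Strict Implicit. Unset Printing Implicit Defensive.
Import Order.TTheory GRing.Theory Num.Theory.
Local Open Scope ring_scope.

Definition profile (n : nat) := 'I_n -> {set 'I_n}.

Definition valid_profile n (S : profile n) : Prop := forall u, u \notin S u.

Definition outcome_edge n (S : profile n) : rel 'I_n :=
  fun u v => (v \in S u) || (u \in S v).

Fixpoint ball n (S : profile n) (k : nat) (u : 'I_n) : {set 'I_n} :=
  match k with
  | 0 => [set u]
  | k'.+1 => ball S k' u :|: [set v | [exists x in ball S k' u, outcome_edge S x v]]
  end.

Definition cost (R : numDomainType) n (w : 'I_n -> R) (alpha : R) (beta : nat)
  (S : profile n) (u : 'I_n) : R :=
  alpha * (#|S u|)%:R + \sum_(v in ~: ball S beta u) w v.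

Definition deviate n (S : profile n) (u : 'I_n) (Su : {set 'I_n}) : profile n :=
  fun x => if x == u then Su else S x.

Definition nash_equilibrium (R : numDomainType) n (w : 'I_n -> R) (alpha : R)
  (beta : nat) (S : profile n) : Prop :=
  valid_profile S /\
  forall (u : 'I_n) (Su : {set 'I_n}), u \notin Su ->
    cost w alpha beta S u <= cost w alpha beta (deviate S u Su) u.

Definition outcome_connected n (S : profile n) : Prop :=
  forall u v : 'I_n, connect (outcome_edge S) u v.

Definition outcome_edgeless n (S : profile n) : Prop :=
  forall u v : 'I_n, ~~ outcome_edge S u v.

(* Main.v *)
Require Import Defs.
From mathcomp Require Import all_boot all_order all_algebra.
From mathcomp Require Import lra.
Import Order.TTheory GRing.Theory Num.Theory.
Set Implicit Arguments. Unset Strict Implicit. Unset Printing Implicit Defensive.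
Local Open Scope ring_scope.

Lemma ballS n (S : profile n) k a y :
  (y \in ball S k.+1 a) = (y \in ball S k a) || [exists x in ball S k a, outcome_edge S x y].
Proof. by rewrite /= in_setU inE. Qed.

Lemma ball_mono_le n (S : profile n) k l a : (k <= l)%N -> ball S k a \subset ball S l a.
Proof.
elim: l => [|l IH]; first by rewrite leqn0 => /eqP ->.
rewrite leq_eqVlt => /orP [/eqP -> //|]; rewrite ltnS => /IH H.
apply: (subset_trans H); apply/subsetP => y Hy; by rewrite ballS Hy.
Qed.

Lemma ball_edge n (S S' : profile n) :
  (forall a b, outcome_edge S a b -> outcome_edge S' a b) ->
  forall k a, ball S k a \subset ball S' k a.
Proof.
move=> He; elim=> [|k IH] a //=; apply/subsetP => y.
rewrite ballS ballS => /orP [Hy|/existsP [z /andP [Hz Ezy]]].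
  by rewrite (subsetP (IH a)).
apply/orP; right; apply/existsP; exists z; rewrite (subsetP (IH a)) //=; exact: He.
Qed.

Lemma ball_left n (S : profile n) k a b :
  outcome_edge S a b -> ball S k b \subset ball S k.+1 a.
Proof.
move=> Eab; elim: k => [|k IH]; apply/subsetP => y.
  move=> /set1P ->; rewrite ballS; apply/orP; right.
  by apply/existsP; exists a; rewrite Eab andbT; apply/set1P.
rewrite ballS => /orP [Hy|/existsP [z /andP [Hz Ezy]]].
  by rewrite ballS (subsetP IH).
rewrite ballS; apply/orP; right; apply/existsP; exists z; by rewrite (subsetP IH).
Qed.

Lemma ball_connect n (S : profile n) k a y :
  y \in ball S k a -> connect (outcome_edge S) a y.
Proof.
elim: k y => [|k IH] y; first by rewrite /= inE => /eqP ->.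
rewrite ballS => /orP [/IH //|/existsP [z /andP [Hz Ezy]]].
apply: connect_trans (IH _ Hz) _; exact: connect1.
Qed.

Lemma edge_sym n (S : profile n) : symmetric (outcome_edge S).
Proof. by move=> a b; rewrite /outcome_edge orbC. Qed.

Lemma sum_diff (R : numDomainType) n (w : 'I_n -> R) (B B' : {set 'I_n}) :
  B \subset B' ->
  \sum_(i in ~: B) w i = \sum_(i in ~: B') w i + \sum_(i in B' :\: B) w i.
Proof.
move=> sB; rewrite (big_setID (~: B')) /=.
have -> : ~: B :&: ~: B' = ~: B'.
  apply/setP => i; rewrite !inE; case: (boolP (i \in B)) => //= iB.
  by rewrite (subsetP sB).
have -> : ~: B :\: ~: B' = B' :\: B.
  by apply/setP => i; rewrite !inE negbK andbC.
done.
Qed.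

Lemma sum_sub (R : numDomainType) n (w : 'I_n -> R) (X Y : {set 'I_n}) :
  (forall i, 0 < w i) -> Y \subset X -> \sum_(i in Y) w i <= \sum_(i in X) w i.
Proof.
move=> wp sY; rewrite [X in _ <= X](big_setID Y) /=.
have -> : X :&: Y = Y by apply/setIidPr.
rewrite lerDl; apply: sumr_ge0 => i _; exact: ltW.
Qed.

Lemma core (R : realFieldType) (n : nat) (w : 'I_n -> R) (alpha : R)
  (beta : nat) (S : profile n) u v x :
  (forall u, 0 < w u) -> (1 < beta)%N ->
  nash_equilibrium w alpha beta S -> v \in S u ->
  ~~ connect (outcome_edge S) u x -> False.
Proof.
move=> wp b2 [val NE] vSu nux.
have cuv : connect (outcome_edge S) u v by apply: connect1; rewrite /outcome_edge vSu.
have csym := sym_connect_sym (@edge_sym n S).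
have nvx : ~~ connect (outcome_edge S) v x.
  by apply: contra nux => H; apply: connect_trans cuv H.
set S' := deviate S u (S u :\ v).
have E' : forall a b, outcome_edge S' a b -> outcome_edge S a b.
  move=> a b; rewrite /outcome_edge /S' /deviate.
  by move=> /orP [H|H]; apply/orP; [left|right]; move: H; case: eqP => [->|_] //;
     rewrite inE => /andP [].
set L := ball S beta u :\: ball S' beta u.
have H1 := NE u (S u :\ v).
rewrite !inE (negbTE (val u)) andbF in H1; have {}H1 := H1 isT.
rewrite /cost /deviate eqxx -/S' in H1.
rewrite (sum_diff w (ball_edge E' beta u)) -/L in H1.
rewrite (cardsD1 v (S u)) vSu natrD mulrDr mulr1 in H1.
have vx : v != x by apply: contra nvx => /eqP ->; exact: connect0.
have xv : x != v by rewrite eq_sym.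
have vSx : v \notin S x.
  apply: contra nvx => H; rewrite csym; apply: connect1; by rewrite /outcome_edge H.
set T := deviate S x (v |: S x).
have ET : forall a b, outcome_edge S a b -> outcome_edge T a b.
  move=> a b; rewrite /outcome_edge /T /deviate.
  by move=> /orP [H|H]; apply/orP; [left|right]; case: eqP => [<-|_] //;
     rewrite inE H orbT.
set X := ball T beta x :\: ball S beta x.
have H2 := NE x (v |: S x).
rewrite !inE (negbTE (val x)) eq_sym (negbTE vx) /= in H2; have {}H2 := H2 isT.
rewrite /cost /deviate eqxx -/T in H2.
rewrite (sum_diff w (ball_edge ET beta x)) -/X in H2.
rewrite cardsU1 vSx natrD mulrDr mulr1 in H2.
have Exv : outcome_edge T x v.
  rewrite /outcome_edge /T /deviate; case: eqP => [_|//]; by rewrite setU11.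
have bvx : forall k, ball T k v \subset ball T k.+1 x := fun k => ball_left k Exv.
have notx : forall y, connect (outcome_edge S) u y -> y \notin ball S beta x.
  move=> y uy; apply/negP => /ball_connect xy; move/negP: nux; apply.
  by apply: connect_trans uy _; rewrite csym.
have b1 : (beta.-1.+1 = beta)%N by rewrite prednK // ltnW.
have uX : u \in X.
  rewrite inE notx ?connect0 //= -b1; apply: (subsetP (bvx _)).
  apply: (subsetP (ball_mono_le T v (_ : 1 <= beta.-1)%N)); first by rewrite -ltnS b1.
  apply: (subsetP (ball_left 0 (ET _ _ (_ : outcome_edge S v u)))).
    by rewrite /outcome_edge vSu orbT.
  by rewrite inE.
have C : forall k y, y \in ball S k u ->
    (y \in ball S' k u) || ((0 < k)%N && (y \in ball S k.-1 v)).
  elim=> [|k IH] y; first by rewrite /= => ->.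
  rewrite ballS => /orP [Hy|/existsP [z /andP [Hz Ezy]]].
    case/orP: (IH y Hy) => [H|/andP [kp H]].
      by rewrite ballS H.
    apply/orP; right; rewrite /=; apply: (subsetP (ball_mono_le S v (leq_pred k))) H.
  case/orP: (IH z Hz) => [H|/andP [kp H]].
    case: (boolP (outcome_edge S' z y)) => E.
      by apply/orP; left; rewrite ballS; apply/orP; right; apply/existsP; exists z; rewrite H.
    have : ((z == u) && (y == v)) || ((y == u) && (z == v)).
      move: Ezy E; rewrite /outcome_edge /S' /deviate.
      case: (z =P u) => [Ez|nz]; case: (y =P u) => [Ey|ny] /=; rewrite ?inE.
      - rewrite Ez Ey => /orP [H'|H'] _; by rewrite (negbTE (val u)) in H'.
      - rewrite Ez => /orP [H'|H'] /norP [A B];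
          [by move: A; rewrite H' andbT negbK orbF | by rewrite H' in B].
      - rewrite Ey => /orP [H'|H'] /norP [A B];
          [by rewrite H' in A | by move: B; rewrite H' andbT negbK].
      - by move=> ->.
    case/orP => [/andP [_ /eqP ->]|/andP [/eqP -> _]].
      apply/orP; right => /=; apply: (subsetP (ball_mono_le S v (leq0n k))); by rewrite inE.
    apply/orP; left; apply: (subsetP (ball_mono_le S' u (leq0n k.+1))); by rewrite inE.
  apply/orP; right => /=.
  have -> : k = k.-1.+1 by rewrite prednK.
  by rewrite ballS; apply/orP; right; apply/existsP; exists z; rewrite H.
have LX : L \subset X.
  apply/subsetP => y; rewrite !inE => /andP [ny Hy].
  have uy := ball_connect Hy.
  rewrite notx //=.
  case/orP: (C _ _ Hy); first by rewrite (negbTE ny).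
  case/andP => _ Hv; rewrite -b1; apply: (subsetP (bvx _)).
  exact: (subsetP (ball_edge ET _ _)).
have uL : u \notin L.
  rewrite !inE negb_and negbK; apply/orP; left.
  apply: (subsetP (ball_mono_le S' u (leq0n beta))); by rewrite inE.
have XL : u |: L \subset X by rewrite subUset sub1set uX LX.
have := sum_sub wp XL.
rewrite big_setU1 //= => H3.
have := wp u.
lra.
Qed.

Theorem proposition3 (R : realFieldType) (n : nat) (w : 'I_n -> R) (alpha : R)
  (beta : nat) (S : profile n) :
  (forall u, 0 < w u) -> 0 < alpha ->
  (1 <= beta)%N -> (beta <= n.-1)%N -> (1 < beta)%N ->
  nash_equilibrium w alpha beta S ->
  outcome_connected S \/ outcome_edgeless S.
Proof.
move=> wp ap _ _ b2 NE.
case: (boolP [forall a, [forall b, connect (outcome_edge S) a b]]) => [H|H].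
  by left => a b; move/forallP: H => /(_ a) /forallP.
right => a0 b0; apply/negP => Eab.
move/forallPn: H => [a /forallPn [b nab]].
have csym := sym_connect_sym (@edge_sym n S).
have [u [v [vSu cuab]]] : exists u v, v \in S u /\ connect (outcome_edge S) u a0.
  case/orP: Eab => H; first by exists a0, b0; split => //; exact: connect0.
  exists b0, a0; split => //; apply: connect1; by rewrite /outcome_edge H.
case: (boolP (connect (outcome_edge S) u a)) => ua.
  apply: (core wp b2 NE vSu (x := b)); apply: contra nab => ub.
  by apply: connect_trans _ ub; rewrite csym.
exact: (core wp b2 NE vSu ua).
Qed.
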